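(* Let $\mathcal{Z}$ and $\mathcal{X}$ be two mutually unbiased orthonormal bases of $\mathbb{C}^2$. Assume the CQC conjecture holds for these bases, i.e. for every two-qubit state $\sigma_{AB}$ on $\mathbb{C}^2\otimes\mathbb{C}^2$ one has $I(Z^A:Z^B)+I(X^A:X^B)\le I(A:B)$. Then every two-qubit state $\rho_{AB}$ satisfies $$H(Z^AZ^B)+H(X^AX^B)\ \ge\ 2+H(AB).$$
   Context: All logarithms are base 2 and $0\log 0=0$. Two orthonormal bases $\{|z_i\rangle\}$, $\{|x_j\rangle\}$ of $\mathbb{C}^d$ are mutually unbiased if $|\langle z_i|x_j\rangle|^2=1/d$ for all $i,j$. $H(AB)$ is the von Neumann entropy of $\rho_{AB}$, $H(A),H(B)$ those of its marginals, and $I(A:B)=H(A)+H(B)-H(AB)$. For a basis $\mathcal{M}=\{|m_j\rangle\}$, $M^A$ and $M^B$ denote the classical random variables obtained when both parties measure their subsystem in $\mathcal{M}$, with joint distribution $p(j,k)=\langle m_j\otimes m_k|\rho_{AB}|m_j\otimes m_k\rangle$; $H(M^AM^B)$ is the Shannon entropy of this joint distribution and $I(M^A:M^B)=H(M^A)+H(M^B)-H(M^AM^B)$ the classical mutual information. *)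

(* Defs.v *)
From HB Require Import structures.
From mathcomp Require Import all_boot all_order all_algebra.
From mathcomp Require Import complex.
From mathcomp Require Import reals exp.
Set Implicit Arguments.
Unset Strict Implicit.
Unset Printing Implicit Defensive.
Import Order.TTheory GRing.Theory Num.Theory.
Local Open Scope ring_scope.
Local Open Scope sesquilinear_scope.

Section QInfo.
Variable R : realType.
Local Notation C := R[i].

Definition log2 (x : R) : R := ln x / ln 2.
Definition xlog2x (x : R) : R := if x == 0 then 0 else x * log2 x.

Definition shannon (T : finType) (p : T -> R) : R := - \sum_(t : T) xlog2x (p t).

(** von Neumann entropy: Shannon entropy of the eigenvalues of a (normal)
    matrix, the eigenvalues being the diagonal of its spectral decomposition
    A = P^-1 diag(sp) P given by spectral.v *)
Definition vN_entropy n (A : 'M[C]_n) : R :=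
  - \sum_(i < n) xlog2x (complex.Re (spectral_diag A 0 i)).

(** index of |i> (x) |k> in C^2 (x) C^2 = C^(2*2) *)
Definition pidx (i k : 'I_2) : 'I_(2 * 2) := mxvec_index i k.

Definition psd n (A : 'M[C]_n) : Prop :=
  forall v : 'cV[C]_n, 0 <= (v ^t* *m A *m v) 0 0.
Definition two_qubit_state (rho : 'M[C]_(2 * 2)) : Prop :=
  psd rho /\ \tr rho = 1.

Definition ptraceB (rho : 'M[C]_(2 * 2)) : 'M[C]_2 :=
  \matrix_(i, j) \sum_(k < 2) rho (pidx i k) (pidx j k).
Definition ptraceA (rho : 'M[C]_(2 * 2)) : 'M[C]_2 :=
  \matrix_(i, j) \sum_(k < 2) rho (pidx k i) (pidx k j).

Definition HAB (rho : 'M[C]_(2 * 2)) : R := vN_entropy rho.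
Definition HA (rho : 'M[C]_(2 * 2)) : R := vN_entropy (ptraceA rho).
Definition HB (rho : 'M[C]_(2 * 2)) : R := vN_entropy (ptraceB rho).
Definition qmutinf rho : R := HA rho + HB rho - HAB rho.

(** orthonormal bases of C^2 (vectors as row vectors, dotmx = inner product) *)
Definition orthonormal_basis (b : 'I_2 -> 'rV[C]_2) : Prop :=
  forall i j, dotmx (b i) (b j) = (i == j)%:R.

Definition mutually_unbiased (z x : 'I_2 -> 'rV[C]_2) : Prop :=
  forall i j, `|dotmx (z i) (x j)| ^+ 2 = 2%:R^-1.

(** joint distribution p(j,k) = <m_j (x) m_k | rho | m_j (x) m_k> *)
Definition meas_joint (m : 'I_2 -> 'rV[C]_2) (rho : 'M[C]_(2 * 2))
  (jk : 'I_2 * 'I_2) : R :=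
  complex.Re (\sum_(a < 2) \sum_(b < 2) \sum_(c < 2) \sum_(d < 2)
     (m jk.1 0 a)^* * (m jk.2 0 b)^* * rho (pidx a b) (pidx c d)
       * m jk.1 0 c * m jk.2 0 d).

Definition meas_margA m rho (j : 'I_2) : R := \sum_(k < 2) meas_joint m rho (j, k).
Definition meas_margB m rho (k : 'I_2) : R := \sum_(j < 2) meas_joint m rho (j, k).

Definition HMM m rho : R := shannon (meas_joint m rho).
Definition cmutinf m rho : R :=
  shannon (meas_margA m rho) + shannon (meas_margB m rho) - HMM m rho.

End QInfo.

(* Main.v *)
Require Import Defs.
From HB Require Import structures.
From mathcomp Require Import all_boot all_order all_algebra.
From mathcomp Require Import complex.
From mathcomp Require Import reals exp.
From mathcomp Require Import classical_sets topology normedtype derive realfun.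
From mathcomp Require Import interval_inference boolp functions.
From mathcomp Require Import ring lra.
Import Order.TTheory GRing.Theory Num.Theory.
Import numFieldNormedType.Exports.
Local Open Scope ring_scope.

Section A.
Variable R : realType.

Lemma d_shift (t k : R) : is_derive t 1 (fun x => k + x) 1.
Proof.
have H := @is_deriveD R R^o R^o (cst k) id t 1 0 1 _ _.
have H1 := H (is_derive_cst _ _ _) (is_derive_id _ _). rewrite add0r in H1. exact: H1.
Qed.

Lemma d_shiftN (t k : R) : is_derive t 1 (fun x => k - x) (-1).
Proof.
have H := @is_deriveB R R^o R^o (cst k) id t 1 0 1 _ _.
have H1 := H (is_derive_cst _ _ _) (is_derive_id _ _). rewrite sub0r in H1. exact: H1.
Qed.

Lemma d_lnp (t : R) : -1 < t -> is_derive t 1 (fun x => ln (1 + x)) (1 + t)^-1.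
Proof.
move=> ht.
have h0 : 0 < 1 + t by lra.
have H := @is_derive1_comp R (@ln R) (fun x => 1 + x) t (1 + t)^-1 1 (is_derive1_ln h0) (d_shift t 1).
rewrite mulr1 in H; exact: H.
Qed.

Lemma d_lnm (t : R) : t < 1 -> is_derive t 1 (fun x => ln (1 - x)) (- (1 - t)^-1).
Proof.
move=> ht.
have h0 : 0 < 1 - t by lra.
have H := @is_derive1_comp R (@ln R) (fun x => 1 - x) t (1 - t)^-1 (-1) (is_derive1_ln h0) (d_shiftN t 1).
rewrite mulrN1 in H; exact: H.
Qed.


Lemma incr_deriv (f df : R -> R) (a b : R) : a <= b ->
  (forall x : R, a <= x <= b -> is_derive x 1 f (df x)) ->
  (forall x, a < x < b -> 0 <= df x) -> f a <= f b.
Proof.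
move=> ab fd dfp.
case: (ltgtP a b) ab => // [ab|<-] _; last by [].
rewrite -subr_ge0.
have [c cab ->] : exists2 c, c \in `]a, b[%R & f b - f a = df c * (b - a).
  apply: MVT => //.
    by move=> x; rewrite in_itv /= => /andP[h1 h2]; apply: fd; rewrite !ltW.
  apply: derivable_within_continuous => x; rewrite in_itv /= => /andP[h1 h2].
  by apply: ex_derive; apply: fd; rewrite h1 h2.
move: cab; rewrite in_itv /= => /dfp h.
by apply: mulr_ge0 => //; rewrite subr_ge0 ltW.
Qed.

Definition Lf (t : R) := ln (1 + t) - ln (1 - t).
Definition Nf (t : R) := (1 + t) * ln (1 + t) + (1 - t) * ln (1 - t).

Lemma d_Nf (t : R) : -1 < t < 1 -> is_derive t 1 Nf (Lf t).
Proof.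
case/andP=> h1 h2.
have H := is_deriveD (is_deriveM (d_shift t 1) (@d_lnp t h1))
                     (is_deriveM (d_shiftN t 1) (@d_lnm t h2)).
have E : (1 + t) *: (1 + t)^-1 + ln (1 + t) *: 1 +
         ((1 - t) *: - (1 - t)^-1 + ln (1 - t) *: -1) = Lf t.
  rewrite /Lf /GRing.scale /= divff; last lra.
  rewrite mulrN divff; last lra.
  rewrite mulr1 mulrN1; lra.
rewrite E in H; exact: H.
Qed.

Lemma d_Lf (t : R) : -1 < t < 1 -> is_derive t 1 Lf ((1 + t)^-1 + (1 - t)^-1).
Proof.
case/andP=> h1 h2.
have H := is_deriveB (@d_lnp t h1) (@d_lnm t h2).
rewrite opprK in H; exact: H.
Qed.

Lemma d_inv_shift (t : R) : 0 < 1 + t -> is_derive t 1 (fun x => (1 + x)^-1) (- (1 + t)^-2).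
Proof.
move=> h.
have H := @is_deriveV R (fun x => 1 + x) t 1 1 (lt0r_neq0 h) (d_shift t 1).
rewrite /GRing.scale /= mulr1 in H. exact: H.
Qed.

Lemma d_inv_shiftN (t : R) : 0 < 1 - t -> is_derive t 1 (fun x => (1 - x)^-1) ((1 - t)^-2).
Proof.
move=> h.
have H := @is_deriveV R (fun x => 1 - x) t (-1) 1 (lt0r_neq0 h) (d_shiftN t 1).
rewrite /GRing.scale /= mulrN1 opprK in H. exact: H.
Qed.

Lemma Lf_ge0 (t : R) : 0 <= t < 1 -> 0 <= Lf t.
Proof.
case/andP=> h1 h2; rewrite /Lf subr_ge0 ler_ln ?posrE; lra.
Qed.

Lemma Lf_le (t a : R) : 0 <= t -> t <= a -> a < 1 -> Lf t <= Lf a.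
Proof.
move=> h1 h2 h3; rewrite /Lf.
have e1 : ln (1 + t) <= ln (1 + a) by rewrite ler_ln ?posrE; lra.
have e2 : ln (1 - a) <= ln (1 - t) by rewrite ler_ln ?posrE; lra.
lra.
Qed.

Lemma J_ineq (a : R) : 0 <= a < 1 -> Lf a <= (1 - a)^-1 - (1 + a)^-1.
Proof.
case/andP=> h1 h2.
rewrite -subr_ge0.
have -> : 0 = (1 - 0)^-1 - (1 + 0)^-1 - Lf 0 :> R.
  by rewrite /Lf !subr0 !addr0 ln1 invr1; lra.
set f := fun x => (1 - x)^-1 - (1 + x)^-1 - Lf x.
rewrite -/(f 0) -/(f a).
apply: (@incr_deriv f (fun t => (1 - t)^-2 + (1 + t)^-2 - ((1 + t)^-1 + (1 - t)^-1))) => //.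
  move=> x /andP[x1 x2].
  have H := is_deriveB (is_deriveB (@d_inv_shiftN x (_ : 0 < 1 - x)) (@d_inv_shift x (_ : 0 < 1 + x)))
                       (@d_Lf x (_ : -1 < x < 1)).
  rewrite opprK in H; apply: H; lra.
move=> x /andP[x1 x2].
set u := (1 - x)^-1; set v := (1 + x)^-1.
have hu : u * (1 - x) = 1 by rewrite mulVf //; lra.
have hv : v * (1 + x) = 1 by rewrite mulVf //; lra.
have u0 : 0 < u by rewrite invr_gt0; lra.
have v0 : 0 < v by rewrite invr_gt0; lra.
rewrite -!exprVn -/u -/v.
have -> : u ^+ 2 + v ^+ 2 - (v + u) = x * (u - v) * (u + v) by nra.
apply: mulr_ge0; last lra.
apply: mulr_ge0; nra.
Qed.


Lemma inv_sum (t : R) : -1 < t < 1 -> (1 + t)^-1 + (1 - t)^-1 = 2 / (1 - t ^+ 2).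
Proof.
case/andP=> h1 h2.
have a1 : 1 + t != 0 by apply: lt0r_neq0; lra.
have a2 : 1 - t != 0 by apply: lt0r_neq0; lra.
have a3 : 1 - t ^+ 2 != 0 by apply: lt0r_neq0; nra.
field; rewrite a3 a1 a2 //.
Qed.

Lemma M_ineq (a c : R) : 0 <= a -> a <= c -> c < 1 -> c * Lf a <= a * Lf c.
Proof.
move=> h1 h2 h3.
rewrite -subr_ge0.
have -> : 0 = a * Lf a - a * Lf a :> R by rewrite subrr.
set f := fun t => a * Lf t - t * Lf a.
rewrite -/(f a) -/(f c).
apply: (@incr_deriv f (fun t => a * ((1 + t)^-1 + (1 - t)^-1) - Lf a * 1)) => //.
  move=> x /andP[x1 x2].
  have H := is_deriveB (is_deriveM (is_derive_cst a x 1) (@d_Lf x (_ : -1 < x < 1)))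
                       (is_deriveM (is_derive_id x 1) (is_derive_cst (Lf a) x 1)).
  rewrite /GRing.scale /= !mulr0 !addr0 !add0r in H. apply: H; lra.
move=> x /andP[x1 x2].
have hJ : Lf a <= (1 - a)^-1 - (1 + a)^-1 by apply: J_ineq; lra.
rewrite mulr1 subr_ge0.
apply: (le_trans hJ).
have e1 : (1 - a)^-1 - (1 + a)^-1 = a * ((1 + a)^-1 + (1 - a)^-1).
  have a1 : 1 + a != 0 by apply: lt0r_neq0; lra.
  have a2 : 1 - a != 0 by apply: lt0r_neq0; lra.
  field; rewrite a1 a2 //.
rewrite e1; apply: ler_wpM2l => //.
rewrite !inv_sum; try lra.
rewrite ler_pdivrMr; last nra.
rewrite mulrC mulrA ler_pdivlMr; last nra.
nra.
Qed.


Lemma d_inner (b k : R) (sg : R) : 0 < k ->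
  is_derive k 1 (fun y => b / 2 * (y^-1 + sg * y)) (b / 2 * (- k ^- 2 + sg)).
Proof.
move=> k0.
have H1 := @is_deriveV R id k 1 1 (lt0r_neq0 k0) (is_derive_id k 1).
have H2 := is_deriveD H1 (is_deriveM (is_derive_cst sg k 1) (is_derive_id k 1)).
have H3 := is_deriveM (is_derive_cst (b / 2) k 1) H2.
apply: (is_derive_eq H3).
rewrite /GRing.scale /= !mulr0 !addr0 !mulr1 /cst. done.
Qed.

Lemma Nf0 : Nf 0 = 0.
Proof. by rewrite /Nf addr0 subr0 ln1 !mulr0 addr0. Qed.

Lemma core (a b c : R) : 0 <= a -> 0 < b -> 0 <= c -> a ^+ 2 + b ^+ 2 = c ^+ 2 -> c < 1 ->
  Nf a + Nf b <= Nf c.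
Proof.
move=> a0 b0 c0 habc c1.
have ac : a < c by nra.
have bc : b <= c by nra.
set k0 := (c - a) / b.
have k00 : 0 < k0 by rewrite /k0 divr_gt0 //; lra.
have hk0 : k0 * b = c - a by rewrite /k0 divfK //; lra.
have k01 : k0 <= 1.
  rewrite /k0 ler_pdivrMr // mul1r.
  have e : (c - a) * (c + a) = b * b by nra.
  have cab : b <= c + a by lra.
  rewrite leNgt; apply/negP => hlt.
  have : b * b < (c - a) * (c + a) by apply: (@lt_le_trans _ _ (b * (c + a))); nra.
  lra.
have ik0 : k0^-1 * b = c + a.
  apply: (@mulfI _ k0); first by apply: lt0r_neq0.
  rewrite mulrA divff; last by apply: lt0r_neq0.
  rewrite mul1r.
  apply: (@mulfI _ b); first by apply: lt0r_neq0.
  rewrite mulrA [b * k0]mulrC hk0; nra.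
set A := fun y : R => b / 2 * (y^-1 + (-1) * y).
set C := fun y : R => b / 2 * (y^-1 + 1 * y).
have Ak0 : A k0 = a.
  rewrite /A.
  have -> : b / 2 * (k0^-1 + -1 * k0) = (k0^-1 * b - k0 * b) / 2 by ring.
  by rewrite ik0 hk0; field.
have Ck0 : C k0 = c.
  rewrite /C.
  have -> : b / 2 * (k0^-1 + 1 * k0) = (k0^-1 * b + k0 * b) / 2 by ring.
  by rewrite ik0 hk0; field.
have A1 : A 1 = 0 by rewrite /A invr1; ring.
have C1 : C 1 = b by rewrite /C invr1; field.
suff : Nf (A k0) - Nf (C k0) <= Nf (A 1) - Nf (C 1).
  by rewrite Ak0 Ck0 A1 C1 Nf0; lra.
have Abnd : forall y, k0 <= y <= 1 -> 0 <= A y.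
  move=> y /andP[y1 y2]; rewrite /A; apply: mulr_ge0; first by apply: divr_ge0; lra.
  have y0 : 0 < y by lra.
  have : y * y^-1 = 1 by rewrite divff //; lra.
  nra.
have Cbnd : forall y, k0 <= y <= 1 -> A y <= C y < 1.
  move=> y /andP[y1 y2]; have y0 : 0 < y by lra.
  have yi : y * y^-1 = 1 by rewrite divff //; lra.
  have yi0 : 0 < y^-1 by rewrite invr_gt0.
  have k0i : k0 * k0^-1 = 1 by rewrite divff //; lra.
  rewrite /A /C; apply/andP; split; first nra.
  apply: (le_lt_trans _ c1); rewrite -Ck0 /C !mul1r.
  apply: ler_wpM2l; first by apply: divr_ge0; lra.
  have : y^-1 + y <= k0^-1 + k0.
    have : y^-1 - k0^-1 = - (y - k0) * (y^-1 * k0^-1).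
      have yn : y != 0 := lt0r_neq0 y0. have kn : k0 != 0 := lt0r_neq0 k00.
      by field; rewrite ?yn ?kn.
    move=> e; have : 1 <= y^-1 * k0^-1.
      rewrite -invfM invf_ge1 //; nra.
    nra.
  done.
apply: (@incr_deriv (fun y => Nf (A y) - Nf (C y)) (fun y => Lf (A y) * (b / 2 * (- y ^- 2 + -1)) - Lf (C y) * (b / 2 * (- y ^- 2 + 1)))); first lra.
  move=> y hy; have y0 : 0 < y by lra.
  have [hA1 hA2] := andP (Cbnd y hy); have hA0 := Abnd y hy.
  have rA : -1 < A y < 1 by apply/andP; split; lra.
  have rC : -1 < C y < 1 by apply/andP; split; lra.
  have dA := @is_derive1_comp R Nf A y _ _ (@d_Nf (A y) rA) (@d_inner b y (-1) y0).
  have dC := @is_derive1_comp R Nf C y _ _ (@d_Nf (C y) rC) (@d_inner b y 1 y0).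
  exact: (is_deriveB dA dC).
move=> y /andP[y1 y2]; have hy : k0 <= y <= 1 by rewrite !ltW.
have [hA1 hA2] := andP (Cbnd y hy); have hA0 := Abnd y hy.
have hM := @M_ineq (A y) (C y) hA0 hA1 hA2.
have y0 : 0 < y by lra.
set u := y^-1.
have yu : y * u = 1 by rewrite divff //; lra.
have u0 : 0 < u by rewrite invr_gt0.
have eA : A y = b / 2 * (u - y) by rewrite /A /u /=; ring.
have eC : C y = b / 2 * (u + y) by rewrite /C /u /=; ring.
rewrite -exprVn -/u.
have key : forall la lc : R, la * (b / 2 * (- u ^+ 2 + -1)) - lc * (b / 2 * (- u ^+ 2 + 1))
   = u * (A y * lc - C y * la).
  move=> la lc.
  have E : la * (b / 2 * (- u ^+ 2 + -1)) - lc * (b / 2 * (- u ^+ 2 + 1))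
     = u * (A y * lc - C y * la) + b / 2 * (lc + la) * (y * u - 1) by rewrite eA eC; ring.
  by rewrite E yu subrr mulr0 addr0.
rewrite key.
apply: mulr_ge0; lra.
Qed.


Lemma Nf1 : Nf 1 = 2 * ln 2.
Proof. by rewrite /Nf subrr mul0r addr0. Qed.

Lemma ln2_gt0 : 0 < ln (2 : R).
Proof. by apply: ln_gt0; lra. Qed.

Lemma Nf_le1 (t : R) : 0 <= t <= 1 -> Nf t <= Nf 1.
Proof.
case/andP=> h1 h2; rewrite Nf1 /Nf.
have e1 : ln (1 + t) <= ln 2 by rewrite ler_ln ?posrE; lra.
have e2 : ln (1 - t) <= 0 by apply: ln_le0; lra.
have l2 := ln2_gt0.
nra.
Qed.

Lemma Nf_mono (x y : R) : 0 <= x -> x <= y -> y <= 1 -> Nf x <= Nf y.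
Proof.
move=> h1 h2 h3.
case: (ltgtP y 1) => [y1|y1|y1]; last 2 first.
- lra.
- by rewrite y1; apply: Nf_le1; lra.
apply: (@incr_deriv Nf Lf) => //.
  by move=> t /andP[t1 t2]; apply: d_Nf; lra.
by move=> t /andP[t1 t2]; apply: Lf_ge0; lra.
Qed.

Lemma Nf_conv (x a : R) : 0 <= x -> x <= a -> a < 1 -> Nf a <= Nf x + Lf a * (a - x).
Proof.
move=> h1 h2 h3.
have : Lf a * x - Nf x <= Lf a * a - Nf a.
  apply: (@incr_deriv (fun t => Lf a * t - Nf t) (fun t => Lf a * 1 - Lf t)) => //.
    move=> t /andP[t1 t2].
    have H := is_deriveB (is_deriveM (is_derive_cst (Lf a) t 1) (is_derive_id t 1)) (@d_Nf t (_ : -1 < t < 1)).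
    apply: (is_derive_eq (H _)); first lra.
    by rewrite /GRing.scale /= mulr0 addr0.
  move=> t /andP[t1 t2]; rewrite mulr1 subr_ge0; apply: Lf_le; lra.
lra.
Qed.

Lemma Nf_c1 (a b : R) : 0 <= a -> 0 <= b -> a ^+ 2 + b ^+ 2 = 1 -> Nf a + Nf b <= Nf 1.
Proof.
move=> a0 b0 hab.
case: (ltgtP a 1) => [a1||a1]; last 2 first.
- nra.
- have -> : b = 0 by nra.
  by rewrite a1 Nf0 addr0.
case: (ltgtP b 1) => [b1||b1]; last 2 first.
- nra.
- have -> : a = 0 by nra.
  by rewrite b1 Nf0 add0r.
have bp : 0 < b by nra.
set K := Lf a * a + Lf b * b.
have K0 : 0 <= K by rewrite /K; apply: addr_ge0; apply: mulr_ge0 => //; apply: Lf_ge0; lra.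
apply/ler_addgt0Pr => e e0.
set t := 1 - e / (K + 2 * e).
have hd : 0 < e / (K + 2 * e) by apply: divr_gt0; lra.
have hd2 : e / (K + 2 * e) <= 1 / 2.
  rewrite ler_pdivrMr; last lra. lra.
have hdK : e / (K + 2 * e) * K <= e.
  rewrite mulrC mulrA ler_pdivrMr; last lra. nra.
have t0 : 0 < t by rewrite /t; lra.
have t1 : t < 1 by rewrite /t; lra.
have ta0 : 0 <= t * a by apply: mulr_ge0; lra.
have tb0 : 0 < t * b by apply: mulr_gt0; lra.
have tab : (t * a) ^+ 2 + (t * b) ^+ 2 = t ^+ 2 by rewrite !exprMn -mulrDr hab mulr1.
have hc := @core (t * a) (t * b) t ta0 tb0 (ltW t0) tab t1.
have taa : t * a <= a by nra.
have tbb : t * b <= b by nra.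
have hca := @Nf_conv (t * a) a ta0 taa a1.
have hcb := @Nf_conv (t * b) b (ltW tb0) tbb b1.
have hN := @Nf_le1 t (_ : 0 <= t <= 1).
have e1 : Lf a * (a - t * a) + Lf b * (b - t * b) = (1 - t) * K by rewrite /K; ring.
have e2 : 1 - t = e / (K + 2 * e) by rewrite /t; ring.
rewrite e2 in e1.
have : Nf a + Nf b <= Nf 1 + e / (K + 2 * e) * K.
  have hN' : Nf t <= Nf 1 by apply: hN; lra.
  rewrite -e1. lra.
lra.
Qed.

End A.

Arguments Nf {R}. Arguments Lf {R}. Arguments core {R}. Arguments Nf_mono {R}. Arguments Nf_c1 {R}. Arguments Nf0 {R}.
Section B.
Variable R : realType.

Lemma Nf_even (t : R) : Nf (- t) = Nf t.
Proof. by rewrite /Nf opprK addrC. Qed.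

Lemma Nineq (a b c : R) : 0 <= a -> 0 <= b -> 0 <= c -> c <= 1 ->
  a ^+ 2 + b ^+ 2 <= c ^+ 2 -> Nf a + Nf b <= Nf c.
Proof.
move=> a0 b0 c0 c1 h.
case: (ltgtP b 0) => [bn|bpos|bp]; first lra; last first.
  rewrite bp Nf0 addr0; apply: Nf_mono => //; nra.
set d := Num.sqrt (a ^+ 2 + b ^+ 2).
have d0 : 0 <= d by apply: sqrtr_ge0.
have dd : d ^+ 2 = a ^+ 2 + b ^+ 2 by rewrite sqr_sqrtr //; nra.
have dc : d <= c by nra.
case: (ltgtP d 1) => [d1||d1]; last 2 first.
- lra.
- have c1' : c = 1 by lra.
  rewrite c1'. apply: (@Nf_c1 R a b a0 b0); by rewrite -dd d1 expr1n.
apply: (le_trans (@core R a b d a0 bpos d0 (esym dd) d1)).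
by apply: Nf_mono.
Qed.

Lemma xlog2xE (x : R) : xlog2x x = x * ln x / ln 2.
Proof. by rewrite /xlog2x /log2; case: eqP => [->|_]; rewrite ?mul0r ?mulrA. Qed.

Lemma ln2x (y : R) : 0 <= y -> y * ln (2 * y) = y * ln y + y * ln 2.
Proof.
move=> y0; case: (ltgtP y 0) => [yn|yp|ye]; [lra| |by rewrite ye !mul0r addr0].
rewrite lnM ?posrE; [ring|lra|lra].
Qed.

Definition H2 (x : R) := - (xlog2x x + xlog2x (1 - x)).

Lemma H2E (x : R) : 0 <= x <= 1 -> H2 x = 1 - Nf (2 * x - 1) / (2 * ln 2).
Proof.
case/andP=> h1 h2.
have l2 := ln2_gt0 R.
rewrite /H2 !xlog2xE /Nf.
have -> : 1 + (2 * x - 1) = 2 * x by ring.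
have -> : 1 - (2 * x - 1) = 2 * (1 - x) by ring.
rewrite -!mulrA !ln2x; try lra.
field; apply: lt0r_neq0; done.
Qed.

Lemma ent_ineq (p q l : R) : 0 <= p <= 1 -> 0 <= q <= 1 -> 0 <= l <= 1 ->
  (2 * p - 1) ^+ 2 + (2 * q - 1) ^+ 2 <= (2 * l - 1) ^+ 2 ->
  1 + H2 l <= H2 p + H2 q.
Proof.
move=> hp hq hl h.
rewrite !H2E //.
have l2 := ln2_gt0 R.
suff : Nf (2 * p - 1) + Nf (2 * q - 1) <= Nf (2 * l - 1).
  move=> H; rewrite -subr_ge0.
  have -> : (1 - Nf (2 * p - 1) / (2 * ln 2)) + (1 - Nf (2 * q - 1) / (2 * ln 2)) - (1 + (1 - Nf (2 * l - 1) / (2 * ln 2))) = (Nf (2 * l - 1) - (Nf (2 * p - 1) + Nf (2 * q - 1))) / (2 * ln 2) :> R.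
    by field; apply: lt0r_neq0.
  apply: divr_ge0; lra.
have ab : forall t : R, -1 <= t <= 1 -> exists s, [/\ 0 <= s, s <= 1, Nf t = Nf s & t ^+ 2 = s ^+ 2].
  move=> t /andP[t1 t2]; case: (lerP 0 t) => ht.
    by exists t; split => //.
  exists (- t); split; try lra; first by rewrite Nf_even.
case/andP: hp => p1 p2; case/andP: hq => q1 q2; case/andP: hl => l1 l2'.
have r1 : -1 <= 2 * p - 1 <= 1 by apply/andP; split; lra.
have r2 : -1 <= 2 * q - 1 <= 1 by apply/andP; split; lra.
have r3 : -1 <= 2 * l - 1 <= 1 by apply/andP; split; lra.
have [s1 [s10 s11 e1 f1]] := ab _ r1.
have [s2 [s20 s21 e2 f2]] := ab _ r2.
have [s3 [s30 s31 e3 f3]] := ab _ r3.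
rewrite e1 e2 e3; apply: Nineq => //.
by rewrite -f1 -f2 -f3.
Qed.

End B.

Section Q.
Variable R : realType.
Local Notation C := R[i].

Lemma bessel3 (r1 r2 r3 u1 u2 u3 v1 v2 v3 : R) :
  u1 ^+ 2 + u2 ^+ 2 + u3 ^+ 2 = 1 -> v1 ^+ 2 + v2 ^+ 2 + v3 ^+ 2 = 1 ->
  u1 * v1 + u2 * v2 + u3 * v3 = 0 ->
  (r1 * u1 + r2 * u2 + r3 * u3) ^+ 2 + (r1 * v1 + r2 * v2 + r3 * v3) ^+ 2
    <= r1 ^+ 2 + r2 ^+ 2 + r3 ^+ 2.
Proof.
move=> hu hv huv.
set al := r1 * u1 + r2 * u2 + r3 * u3.
set be := r1 * v1 + r2 * v2 + r3 * v3.
have E : r1 ^+ 2 + r2 ^+ 2 + r3 ^+ 2 - (al ^+ 2 + be ^+ 2) =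
  (r1 - al * u1 - be * v1) ^+ 2 + (r2 - al * u2 - be * v2) ^+ 2 + (r3 - al * u3 - be * v3) ^+ 2
  - al ^+ 2 * (u1 ^+ 2 + u2 ^+ 2 + u3 ^+ 2 - 1) - be ^+ 2 * (v1 ^+ 2 + v2 ^+ 2 + v3 ^+ 2 - 1)
  - 2 * al * be * (u1 * v1 + u2 * v2 + u3 * v3) by rewrite /al /be; ring.
rewrite -subr_ge0 E hu hv huv !subrr !mulr0 !subr0.
by rewrite !addr_ge0 // sqr_ge0.
Qed.

Definition qf (s : 'M[C]_2) (v0 v1 : C) : C :=
  v0^* * s 0 0 * v0 + v0^* * s 0 1 * v1 + v1^* * s 1 0 * v0 + v1^* * s 1 1 * v1.

Lemma bloch (s : 'M[C]_2) (a0 a1 b0 b1 : C) :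
  a0 * a0^* + a1 * a1^* = 1 -> b0 * b0^* + b1 * b1^* = 1 ->
  (a0 * b0^* + a1 * b1^*) * (a0 * b0^* + a1 * b1^*)^* = 2^-1 ->
  s 1 0 = (s 0 1)^* -> complex.Im (s 0 0) = 0 -> s 1 1 = 1 - s 0 0 ->
  (2 * complex.Re (qf s a0 a1) - 1) ^+ 2 + (2 * complex.Re (qf s b0 b1) - 1) ^+ 2
   <= 1 - 4 * complex.Re (s 0 0 * s 1 1 - s 0 1 * s 1 0).
Proof.
rewrite /qf => ha hb hab -> h00 ->.
move: ha hb hab h00.
case: (s 0 0) => t t0 /=.
case: (s 0 1) => w1 w2.
case: a0 => x0 y0; case: a1 => x1 y1; case: b0 => X0 Y0; case: b1 => X1 Y1.
move=> ha hb hab h00; subst t0.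
move/(congr1 (@complex.Re R)): ha; move/(congr1 (@complex.Re R)): hb; move/(congr1 (@complex.Re R)): hab.
have e1 : (1 : C) = (1 +i* 0)%C by [].
have e2 : (2^-1 : C) = ((2 : R)^-1 +i* 0)%C.
  by rewrite complexr0 fmorphV rmorph_nat.
rewrite e1 e2.
simpc. rewrite /=.
move=> hab hb ha.
set P := (X in (2 * X - 1) ^+ 2 + _ <= _).
set Q := (X in _ + (2 * X - 1) ^+ 2 <= _).
set Na := x0 * x0 + y0 * y0 + (x1 * x1 + y1 * y1) in ha.
set Nb := X0 * X0 + Y0 * Y0 + (X1 * X1 + Y1 * Y1) in hb.
have EP : 2 * P - 1 = (2 * t - 1) * (x0 * x0 + y0 * y0 - (x1 * x1 + y1 * y1))
   + (2 * w1) * (2 * (x0 * x1 + y0 * y1)) + (2 * w2) * (- 2 * (x0 * y1 - y0 * x1)) + (Na - 1).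
  rewrite /P /Na; ring.
have EQ : 2 * Q - 1 = (2 * t - 1) * (X0 * X0 + Y0 * Y0 - (X1 * X1 + Y1 * Y1))
   + (2 * w1) * (2 * (X0 * X1 + Y0 * Y1)) + (2 * w2) * (- 2 * (X0 * Y1 - Y0 * X1)) + (Nb - 1).
  rewrite /Q /Nb; ring.
rewrite EP EQ ha hb subrr !addr0.
have -> : 1 - 4 * (t * (1 - t) + (- (w2 * w2) - w1 * w1)) = (2 * t - 1) ^+ 2 + (2 * w1) ^+ 2 + (2 * w2) ^+ 2 by ring.
apply: bessel3.
- have -> : (x0 * x0 + y0 * y0 - (x1 * x1 + y1 * y1)) ^+ 2 + (2 * (x0 * x1 + y0 * y1)) ^+ 2 + (- 2 * (x0 * y1 - y0 * x1)) ^+ 2 = Na ^+ 2 by rewrite /Na; ring.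
  by rewrite ha expr1n.
- have -> : (X0 * X0 + Y0 * Y0 - (X1 * X1 + Y1 * Y1)) ^+ 2 + (2 * (X0 * X1 + Y0 * Y1)) ^+ 2 + (- 2 * (X0 * Y1 - Y0 * X1)) ^+ 2 = Nb ^+ 2 by rewrite /Nb; ring.
  by rewrite hb expr1n.
- set L := (X in X = 2^-1) in hab.
  have -> : (x0 * x0 + y0 * y0 - (x1 * x1 + y1 * y1)) * (X0 * X0 + Y0 * Y0 - (X1 * X1 + Y1 * Y1)) + (2 * (x0 * x1 + y0 * y1)) * (2 * (X0 * X1 + Y0 * Y1)) + (- 2 * (x0 * y1 - y0 * x1)) * (- 2 * (X0 * Y1 - Y0 * X1)) = 2 * L - Na * Nb by rewrite /L /Na /Nb; ring.
  clear e1 e2; rewrite hab ha hb mulr1 divff ?subrr // pnatr_eq0 //.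
Qed.
End Q.

Local Open Scope sesquilinear_scope.
Arguments qf {R}.

Section Q2.
Variable R : realType.
Local Notation C := R[i].

Lemma sum2 (V : nmodType) (F : 'I_2 -> V) : \sum_(i < 2) F i = F 0 + F 1.
Proof. rewrite big_ord_recl big_ord1; congr (_ + F _); exact: val_inj. Qed.

Lemma psd_qf (s : 'M[C]_2) (v0 v1 : C) : psd s -> 0 <= qf s v0 v1.
Proof.
move=> hs.
have := hs (\col_(i < 2) if (i : nat) == 0%N then v0 else v1).
rewrite !mxE sum2 !mxE !sum2 !mxE /= /qf.
congr (0 <= _); ring.
Qed.

Lemma herm2 (s : 'M[C]_2) : psd s ->
  [/\ s 1 0 = (s 0 1)^*, complex.Im (s 0 0) = 0 & complex.Im (s 1 1) = 0].
Proof.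
move=> hs.
have h1 := @psd_qf s 1 0 hs.
have h2 := @psd_qf s 0 1 hs.
have h3 := @psd_qf s 1 1 hs.
have h4 := @psd_qf s 1 'i%C hs.
move: h1 h2 h3 h4; rewrite /qf.
case: (s 0 0) => a b; case: (s 0 1) => c d; case: (s 1 0) => e f; case: (s 1 1) => g h.
have e0 : (0 : C) = (0 +i* 0)%C by [].
have e1 : (1 : C) = (1 +i* 0)%C by [].
rewrite e0 e1; simpc; rewrite /=.
move=> /andP[/eqP hb _] /andP[/eqP hh _] /andP[/eqP h3 _] /andP[/eqP h4 _].
split => //.
have -> : e = c by lra.
have -> : f = - d by lra.
by [].
Qed.

Lemma conj_real (x : C) : complex.Im x = 0 -> x^* = x.
Proof. case: x => a b /= ->. change ((a +i* 0)%C^*%C = (a +i* 0)%C). by rewrite /= oppr0. Qed.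

Lemma trconj (P X : 'M[C]_2) : P \in unitmx -> \tr (invmx P *m X *m P) = \tr X.
Proof. by move=> hP; rewrite mxtrace_mulC mulmxA mulmxV // mul1mx. Qed.

Lemma spec2 (s : 'M[C]_2) : psd s -> \tr s = 1 ->
  exists l : R, [/\ 0 <= l, l <= 1, vN_entropy s = - (xlog2x l + xlog2x (1 - l))
    & l * (1 - l) = complex.Re (s 0 0 * s 1 1 - s 0 1 * s 1 0)].
Proof.
move=> hs htr.
have [h10 h00 h11] := herm2 s hs.
have sh : s ^t* = s.
  apply/matrixP => i j; rewrite !mxE.
  case: i => [[|[|//]] i2]; case: j => [[|[|//]] j2].
  - have -> : Ordinal j2 = 0 by apply: val_inj.
    have -> : Ordinal i2 = 0 by apply: val_inj.
    by rewrite conj_real.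
  - have -> : Ordinal j2 = 1 by apply: val_inj.
    have -> : Ordinal i2 = 0 by apply: val_inj.
    by rewrite h10 conjCK.
  - have -> : Ordinal j2 = 0 by apply: val_inj.
    have -> : Ordinal i2 = 1 by apply: val_inj.
    by rewrite h10.
  - have -> : Ordinal j2 = 1 by apply: val_inj.
    have -> : Ordinal i2 = 1 by apply: val_inj.
    by rewrite conj_real.
have sn : s \is normalmx by apply/normalmxP; rewrite sh.
have hP := orthomx_spectralP sn.
set P := spectralmx s in hP; set sp := spectral_diag s in hP.
have Pu : P \is unitarymx by apply: spectral_unitarymx.
have Pun : P \in unitmx by apply: unitarymx_unit.
have Pinv : invmx P = P ^t* by apply: invmx_unitary.
have hD : P *m s *m P ^t* = diag_mx sp.
  by rewrite hP -Pinv !mulmxA mulmxV // mul1mx -mulmxA mulmxV // mulmx1.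
have spge : forall i, 0 <= sp 0 i.
  move=> i.
  have := hs (\col_j (P i j)^*).
  have -> : sp 0 i = diag_mx sp i i by rewrite mxE eqxx mulr1n.
  rewrite -hD !mxE !sum2 !mxE !sum2 !mxE !conjCK.
  congr (0 <= _); ring.
have htr2 : sp 0 0 + sp 0 1 = 1.
  by rewrite -htr hP trconj // mxtrace_diag sum2.
have htrsq : sp 0 0 ^+ 2 + sp 0 1 ^+ 2 = \tr (s *m s).
  rewrite hP !mulmxA.
  have -> : invmx P *m diag_mx sp *m P *m invmx P *m diag_mx sp *m P = invmx P *m (diag_mx sp *m diag_mx sp) *m P.
    have PP : P *m invmx P = 1%:M by apply: mulmxV.
    by rewrite -(mulmxA (invmx P *m diag_mx sp) P (invmx P)) PP mulmx1 -(mulmxA (invmx P) (diag_mx sp) (diag_mx sp)).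
  rewrite trconj // /mxtrace !sum2 !mxE !sum2 !mxE /=.
  by rewrite !mulr1n !mulr0n !mulr0 !addr0 !add0r !expr2.
have trss : \tr (s *m s) = s 0 0 ^+ 2 + 2 * (s 0 1 * s 1 0) + s 1 1 ^+ 2.
  rewrite /mxtrace !sum2 !mxE !sum2 /=; ring.
have htr' : s 0 0 + s 1 1 = 1 by rewrite -htr /mxtrace sum2.
have det : sp 0 0 * sp 0 1 = s 0 0 * s 1 1 - s 0 1 * s 1 0.
  apply: (@mulfI _ 2); first by rewrite pnatr_eq0.
  have e1 : 2 * (sp 0 0 * sp 0 1) = (sp 0 0 + sp 0 1) ^+ 2 - (sp 0 0 ^+ 2 + sp 0 1 ^+ 2) by ring.
  have e2 : 2 * (s 0 0 * s 1 1 - s 0 1 * s 1 0) = (s 0 0 + s 1 1) ^+ 2 - (s 0 0 ^+ 2 + 2 * (s 0 1 * s 1 0) + s 1 1 ^+ 2) by ring.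
  by rewrite e1 e2 htr2 htr' htrsq trss.
have g0 := spge 0; have g1 := spge 1.
move: g0 g1 htr2 det.
rewrite /vN_entropy sum2 -/sp.
case: (sp 0 0) => l l'; case: (sp 0 1) => m m'.
rewrite !lecE /= => /andP[/eqP e0 l0] /andP[/eqP e1 m0]; subst l' m'.
have E1 : (1 : C) = (1 +i* 0)%C by [].
rewrite E1 => [[hlm _]] <-.
exists l; split; first by [].
- lra.
- by have -> : m = 1 - l by lra.
- have -> : m = 1 - l by lra.
  by rewrite /= !mulr0 subr0.
Qed.

End Q2.

Local Open Scope sesquilinear_scope.
Arguments qf {R}.

Section Q3.
Variable R : realType.
Local Notation C := R[i].

Lemma sum4 (V : nmodType) (F : 'I_(2 * 2) -> V) :
  \sum_k F k = \sum_(a < 2) \sum_(b < 2) F (pidx a b).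
Proof.
rewrite pair_bigA (reindex _ (curry_mxvec_bij _ _)) /=.
by apply: eq_bigr => [[a b]].
Qed.

Lemma compl (z : 'I_2 -> 'rV[C]_2) : orthonormal_basis z ->
  forall b d, \sum_(k < 2) (z k 0 b)^* * z k 0 d = (b == d)%:R.
Proof.
move=> hz.
set M := \matrix_(i < 2, a < 2) z i 0 a.
have hM : M *m M ^t* = 1%:M.
  apply/matrixP => i j; rewrite !mxE -(hz i j) dotmxE !mxE.
  by apply: eq_bigr => k _; rewrite !mxE.
have hM' := mulmx1C hM.
move=> b d; move/matrixP: hM' => /(_ b d); rewrite !mxE => <-.
by apply: eq_bigr => k _; rewrite !mxE.
Qed.


Lemma quad4 (rho : 'M[C]_(2 * 2)) (w : 'cV[C]_(2 * 2)) :
  (w ^t* *m rho *m w) 0 0 = \sum_(a < 2) \sum_(b < 2) \sum_(c < 2) \sum_(d < 2)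
     (w (pidx a b) 0)^* * rho (pidx a b) (pidx c d) * w (pidx c d) 0.
Proof.
rewrite !mxE sum4 !sum2 !mxE !sum4 !sum2 !mxE.
ring.
Qed.


Lemma psd_ptraceB (rho : 'M[C]_(2 * 2)) : psd rho -> psd (ptraceB rho).
Proof.
move=> h v.
pose w k := (mxvec (\matrix_(a < 2, b < 2) (if b == k then v a 0 else 0)))^T.
have wE : forall k a b, w k (pidx a b) 0 = if b == k then v a 0 else 0.
  by move=> k a b; rewrite /w mxE /pidx mxvecE mxE.
have := addr_ge0 (h (w 0)) (h (w 1)).
rewrite !quad4 !sum2 !wE /=.
match goal with |- is_true (@Order.le _ _ _ ?A) -> is_true (@Order.le _ _ _ ?B) => have E : B = A end; last by rewrite E.
rewrite /ptraceB !mxE !sum2 !mxE !sum2 !mxE !sum2 conjC0; ring.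
Qed.

Lemma psd_ptraceA (rho : 'M[C]_(2 * 2)) : psd rho -> psd (ptraceA rho).
Proof.
move=> h v.
pose w k := (mxvec (\matrix_(a < 2, b < 2) (if a == k then v b 0 else 0)))^T.
have wE : forall k a b, w k (pidx a b) 0 = if a == k then v b 0 else 0.
  by move=> k a b; rewrite /w mxE /pidx mxvecE mxE.
have := addr_ge0 (h (w 0)) (h (w 1)).
rewrite !quad4 !sum2 !wE /=.
match goal with |- is_true (@Order.le _ _ _ ?A) -> is_true (@Order.le _ _ _ ?B) => have E : B = A end; last by rewrite E.
rewrite /ptraceA !mxE !sum2 !mxE !sum2 !mxE !sum2 conjC0; ring.
Qed.

Lemma tr_ptraceB (rho : 'M[C]_(2 * 2)) : \tr (ptraceB rho) = \tr rho.
Proof. by rewrite /mxtrace sum4 !sum2 !mxE !sum2. Qed.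

Lemma tr_ptraceA (rho : 'M[C]_(2 * 2)) : \tr (ptraceA rho) = \tr rho.
Proof. rewrite /mxtrace sum4 !sum2 !mxE !sum2; ring. Qed.


Lemma margA_qf (m : 'I_2 -> 'rV[C]_2) (rho : 'M[C]_(2 * 2)) j : orthonormal_basis m ->
  meas_margA m rho j = complex.Re (qf (ptraceB rho) (m j 0 0) (m j 0 1)).
Proof.
move=> hm; have hc := compl m hm.
rewrite /meas_margA /meas_joint sum2 -raddfD /=; congr (complex.Re _).
transitivity (\sum_(a < 2) \sum_(c < 2) \sum_(b < 2) \sum_(d < 2)
   (m j 0 a)^* * rho (pidx a b) (pidx c d) * m j 0 c * (\sum_(k < 2) (m k 0 b)^* * m k 0 d)).
  by rewrite !sum2; ring.
transitivity (\sum_(a < 2) \sum_(c < 2) \sum_(b < 2) \sum_(d < 2)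
   (m j 0 a)^* * rho (pidx a b) (pidx c d) * m j 0 c * (b == d)%:R).
  apply: eq_bigr => a _; apply: eq_bigr => c _; apply: eq_bigr => b _; apply: eq_bigr => d _.
  by rewrite hc.
rewrite !sum2 /qf /ptraceB !mxE !sum2 /=.
ring.
Qed.

Lemma margB_qf (m : 'I_2 -> 'rV[C]_2) (rho : 'M[C]_(2 * 2)) k : orthonormal_basis m ->
  meas_margB m rho k = complex.Re (qf (ptraceA rho) (m k 0 0) (m k 0 1)).
Proof.
move=> hm; have hc := compl m hm.
rewrite /meas_margB /meas_joint sum2 -raddfD /=; congr (complex.Re _).
transitivity (\sum_(b < 2) \sum_(d < 2) \sum_(a < 2) \sum_(c < 2)
   (m k 0 b)^* * rho (pidx a b) (pidx c d) * m k 0 d * (\sum_(j < 2) (m j 0 a)^* * m j 0 c)).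
  by rewrite !sum2; ring.
transitivity (\sum_(b < 2) \sum_(d < 2) \sum_(a < 2) \sum_(c < 2)
   (m k 0 b)^* * rho (pidx a b) (pidx c d) * m k 0 d * (a == c)%:R).
  apply: eq_bigr => b _; apply: eq_bigr => d _; apply: eq_bigr => a _; apply: eq_bigr => c _.
  by rewrite hc.
rewrite !sum2 /qf /ptraceA !mxE !sum2 /=.
ring.
Qed.

End Q3.

Local Open Scope sesquilinear_scope.
Arguments qf {R}.
Arguments H2 {R}. Arguments ent_ineq {R}. Arguments herm2 {R}. Arguments spec2 {R}. Arguments compl {R}. Arguments psd_qf {R}. Arguments bloch {R}.

Section Q4.
Variable R : realType.
Local Notation C := R[i].

Lemma key2 (s : 'M[C]_2) (z x : 'I_2 -> 'rV[C]_2) :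
  orthonormal_basis z -> orthonormal_basis x -> mutually_unbiased z x ->
  psd s -> \tr s = 1 ->
  1 + vN_entropy s <= shannon (fun j => complex.Re (qf s (z j 0 0) (z j 0 1)))
                    + shannon (fun j => complex.Re (qf s (x j 0 0) (x j 0 1))).
Proof.
move=> hz hx hzx hs htr.
have [h10 h00 h11] := herm2 s hs.
have htr' : s 1 1 = 1 - s 0 0 by rewrite -htr /mxtrace sum2 addrAC subrr add0r.
have [l [l0 l1 hv hdet]] := spec2 s hs htr.
have sh : forall m, orthonormal_basis m ->
   shannon (fun j => complex.Re (qf s (m j 0 0) (m j 0 1))) = H2 (complex.Re (qf s (m 0 0 0) (m 0 0 1)))
   /\ 0 <= complex.Re (qf s (m 0 0 0) (m 0 0 1)) <= 1.
  move=> m hm; have hc := compl m hm.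
  have E : qf s (m 0 0 0) (m 0 0 1) + qf s (m 1 0 0) (m 1 0 1) =
     s 0 0 * (\sum_(k < 2) (m k 0 0)^* * m k 0 0) + s 0 1 * (\sum_(k < 2) (m k 0 0)^* * m k 0 1)
     + s 1 0 * (\sum_(k < 2) (m k 0 1)^* * m k 0 0) + s 1 1 * (\sum_(k < 2) (m k 0 1)^* * m k 0 1).
    by rewrite /qf !sum2; ring.
  rewrite !hc /= htr' in E.
  have E2 : qf s (m 0 0 0) (m 0 0 1) + qf s (m 1 0 0) (m 1 0 1) = 1 by rewrite E; ring.
  have E3 := congr1 (@complex.Re R) E2; rewrite raddfD /= in E3.
  have p0 : 0 <= complex.Re (qf s (m 0 0 0) (m 0 0 1)).
    by have := psd_qf s (m 0 0 0) (m 0 0 1) hs; rewrite lecE => /andP[_].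
  have p1 : 0 <= complex.Re (qf s (m 1 0 0) (m 1 0 1)).
    by have := psd_qf s (m 1 0 0) (m 1 0 1) hs; rewrite lecE => /andP[_].
  split; last by apply/andP; split; lra.
  rewrite /shannon sum2 /H2.
  have -> : complex.Re (qf s (m 1 0 0) (m 1 0 1)) = 1 - complex.Re (qf s (m 0 0 0) (m 0 0 1)) by lra.
  by [].
have [shz /andP[pz0 pz1]] := sh z hz.
have [shx /andP[px0 px1]] := sh x hx.
rewrite hv shz shx.
have ha : z 0 0 0 * (z 0 0 0)^* + z 0 0 1 * (z 0 0 1)^* = 1.
  by have := hz 0 0; rewrite dotmxE !mxE sum2 !mxE eqxx.
have hb : x 0 0 0 * (x 0 0 0)^* + x 0 0 1 * (x 0 0 1)^* = 1.
  by have := hx 0 0; rewrite dotmxE !mxE sum2 !mxE eqxx.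
have hab : (z 0 0 0 * (x 0 0 0)^* + z 0 0 1 * (x 0 0 1)^*) * (z 0 0 0 * (x 0 0 0)^* + z 0 0 1 * (x 0 0 1)^*)^* = 2^-1.
  by have := hzx 0 0; rewrite normCK dotmxE !mxE sum2 !mxE.
have hbl := bloch s (z 0 0 0) (z 0 0 1) (x 0 0 0) (x 0 0 1) ha hb hab h10 h00 htr'.
apply: ent_ineq.
- by apply/andP; split.
- by apply/andP; split.
- by apply/andP; split.
- have -> : (2 * l - 1) ^+ 2 = 1 - 4 * (l * (1 - l)) by ring.
  by rewrite hdet.
Qed.


End Q4.

Arguments qf {R}.
Arguments key2 {R}. Arguments margA_qf {R}. Arguments margB_qf {R}.
Arguments psd_ptraceA {R}. Arguments psd_ptraceB {R}. Arguments tr_ptraceA {R}. Arguments tr_ptraceB {R}.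

Local Close Scope sesquilinear_scope.
Theorem proposition1 (R : realType) (Z X : 'I_2 -> 'rV[R[i]]_2) :
  orthonormal_basis Z -> orthonormal_basis X -> mutually_unbiased Z X ->
  (forall sigma : 'M[R[i]]_(2 * 2), two_qubit_state sigma ->
     cmutinf Z sigma + cmutinf X sigma <= qmutinf sigma) ->
  forall rho : 'M[R[i]]_(2 * 2), two_qubit_state rho ->
    HMM Z rho + HMM X rho >= 2 + HAB rho.
Proof.
move=> hZ hX hZX hCQC rho [hp ht].
have h := hCQC rho (conj hp ht).
have eA : forall m, orthonormal_basis m ->
   shannon (meas_margA m rho) = shannon (fun j => complex.Re (qf (ptraceB rho) (m j 0 0) (m j 0 1))).
  by move=> m hm; rewrite /shannon; congr (- _); apply: eq_bigr => j _; rewrite (margA_qf m rho j hm).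
have eB : forall m, orthonormal_basis m ->
   shannon (meas_margB m rho) = shannon (fun j => complex.Re (qf (ptraceA rho) (m j 0 0) (m j 0 1))).
  by move=> m hm; rewrite /shannon; congr (- _); apply: eq_bigr => j _; rewrite (margB_qf m rho j hm).
have uA := key2 (ptraceB rho) Z X hZ hX hZX (psd_ptraceB rho hp) (etrans (tr_ptraceB rho) ht).
have uB := key2 (ptraceA rho) Z X hZ hX hZX (psd_ptraceA rho hp) (etrans (tr_ptraceA rho) ht).
rewrite -(eA Z hZ) -(eA X hX) in uA.
rewrite -(eB Z hZ) -(eB X hX) in uB.
move: h; rewrite /cmutinf /qmutinf /HA /HB.
lra.
Qed.
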